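(* Let $\mathsf{F}\colon\mathbf{BPMet}\to\mathbf{BPMet}$ be a functor that preserves isometries, is locally non-expansive, and admits a dense $\omega$-bounded subfunctor. Then there is a set $\Lambda$ of predicate liftings for $\mathsf{F}$ of finite arity such that the coalgebraic logic $\mathcal{L}(\Lambda)$ is expressive, i.e. for every $\mathsf{F}$-coalgebra $(X,d,\alpha)$ and all states $x,y$, $ld^\Lambda_\alpha(x,y)\ge bd^{\mathsf{F}}_\alpha(x,y)$ as real numbers.
   Context: $\mathbf{BPMet}$ is the category of bounded-by-1 pseudometric spaces $(X,d)$ ($d\colon X\times X\to[0,1]$, $d(x,x)=0$, symmetric, triangle inequality) and non-expansive maps; isometries are maps with $d(fx,fy)=d(x,y)$. (This is the category of symmetric $\mathcal{V}$-categories for the quantale $\mathcal{V}=[0,1]_\oplus$: $[0,1]$ ordered by $\ge$, with truncated addition as tensor and unit $0$; in quantale terms $\bigvee$ is numerical infimum.) Let $[0,1]$ carry the metric $|u-v|$ and $[0,1]^n$ the sup metric. An $n$-ary predicate lifting for $\mathsf{F}$ is a natural transformation $\lambda\colon\mathbf{BPMet}(-,[0,1]^n)\to\mathbf{BPMet}(\mathsf{F}-,[0,1])$. $\mathsf{F}$ is locally non-expansive if for all non-expansive $f,g\colon X\to Y$, $\sup_{t\in\mathsf{F}X}d_{\mathsf{F}Y}(\mathsf{F}f(t),\mathsf{F}g(t))\le\sup_{x}d_Y(f(x),g(x))$. A subfunctor $\mathsf{G}$ of $\mathsf{F}$ (with $\mathsf{G}X\subseteq\mathsf{F}X$ carrying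 the subspace metric, inclusions natural) is dense if $\mathsf{G}X$ is dense in $\mathsf{F}X$ for all $X$; $\mathsf{G}$ is $\omega$-bounded if for each $X$ and $t\in\mathsf{G}X$ there are a finite subspace $X_0\subseteq X$ with inclusion $i$ and $t'\in\mathsf{G}X_0$ with $t=\mathsf{G}i(t')$. An $\mathsf{F}$-coalgebra is a non-expansive $\alpha\colon(X,d)\to\mathsf{F}(X,d)$; morphisms are non-expansive $f$ with $\beta f=\mathsf{F}f\cdot\alpha$. Behavioural distance: $bd^{\mathsf{F}}_\alpha(x,y)=\inf\{d_Y(f(x),f(y))\mid f\colon(X,d,\alpha)\to(Y,d_Y,\beta)\text{ coalgebra morphism}\}$. Formulas of $\mathcal{L}(\Lambda)$: $\phi::=\top\mid\phi_1\vee\phi_2\mid\phi_1\wedge\phi_2\mid u\otimes\phi\mid\hom_s(u,\phi)\mid\lambda(\phi_1,\dots,\phi_n)$ with $u\in[0,1]$, $\lambda\in\Lambda$ $n$-ary; semantics are non-expansive maps $[\![\phi]\!]\colon X\to[0,1]$ with $[\![\top]\!]=0$, $\vee$ = pointwise $\min$, $\wedge$ = pointwise $\max$, $u\otimes\phi=\min(1,u+[\![\phi]\!])$, $\hom_s(u,\phi)=|[\![\phi]\!]-u|$, and $[\![\lambda(\phi_1,\dots,\phi_n)]\!]=\lambda_X(\langle[\![\phi_1]\!],\dots,[\![\phi_n]\!]\rangle)\cdot\alpha$. Logical distance: $ld^\Lambda_\alpha(x,y)=\sup_{\phi}|[\![\phi]\!](x)-[\![\phi]\!](y)|$. *)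

(* Defs.v *)
From Stdlib Require Import Reals Lra.
From Stdlib Require List.
From mathcomp Require Import ssreflect ssrfun ssrbool eqtype ssrnat seq fintype bigop.
From Coquelicot Require Import Rbar Lub.

Set Implicit Arguments.
Unset Strict Implicit.
Open Scope R_scope.

Record BPMet := {
  car :> Type;
  dist : car -> car -> R;
  dist_bnd : forall x y, 0 <= dist x y <= 1;
  dist_refl : forall x, dist x x = 0;
  dist_sym : forall x y, dist x y = dist y x;
  dist_tri : forall x y z, dist x z <= dist x y + dist y z }.
Arguments dist {b} _ _.

Record NE (X Y : BPMet) := {
  ne :> X -> Y;
  ne_nexp : forall x y, dist (ne x) (ne y) <= dist x y }.

Definition isometry (X Y : BPMet) (f : NE X Y) : Prop :=
  forall x y, dist (f x) (f y) = dist x y.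

Definition ne_id (X : BPMet) : NE X X.
Proof. refine {| ne := fun x => x |}. intros; lra. Defined.

Definition ne_comp (X Y Z : BPMet) (g : NE Y Z) (f : NE X Y) : NE X Z.
Proof.
  refine {| ne := fun x => g (f x) |}.
  intros x y. eapply Rle_trans; [apply ne_nexp|apply ne_nexp].
Defined.

Record Functor := {
  Fo : BPMet -> BPMet;
  Fm : forall X Y : BPMet, NE X Y -> NE (Fo X) (Fo Y);
  Fm_id : forall (X : BPMet) (t : Fo X), Fm (ne_id X) t = t;
  Fm_comp : forall (X Y Z : BPMet) (f : NE X Y) (g : NE Y Z) (t : Fo X),
      Fm (ne_comp g f) t = Fm g (Fm f t) }.
Arguments Fm _ {X Y} _.

Definition preserves_isometries (F : Functor) : Prop :=
  forall (X Y : BPMet) (f : NE X Y), isometry f -> isometry (Fm F f).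

(* sup_t d(Ff t, Fg t) <= sup_x d(f x, g x), sups taken in [0,1] *)
Definition locally_nonexpansive (F : Functor) : Prop :=
  forall (X Y : BPMet) (f g : NE X Y) (c : R), 0 <= c ->
    (forall x : X, dist (f x) (g x) <= c) ->
    forall t : Fo F X, dist (Fm F f t) (Fm F g t) <= c.

Definition Sub (X : BPMet) (l : list X) : BPMet.
Proof.
  refine {| car := {x : X | List.In x l};
            dist := fun a b : {x : X | List.In x l} => dist (proj1_sig a) (proj1_sig b) |}.
  - intros; apply dist_bnd.
  - intros; apply dist_refl.
  - intros; apply dist_sym.
  - intros; apply dist_tri.
Defined.

Definition sub_incl (X : BPMet) (l : list X) : NE (Sub l) X.
Proof. refine {| ne := fun a : Sub l => proj1_sig a |}. intros; simpl; lra. Defined.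

Record SubFunctor (F : Functor) := {
  sf_pred : forall X : BPMet, Fo F X -> Prop;
  sf_closed : forall (X Y : BPMet) (f : NE X Y) (t : Fo F X),
      sf_pred t -> sf_pred (Fm F f t) }.
Arguments sf_pred {F} _ {X} _.

Definition dense_sub (F : Functor) (G : SubFunctor F) : Prop :=
  forall (X : BPMet) (t : Fo F X) (eps : R), 0 < eps ->
    exists t' : Fo F X, sf_pred G t' /\ dist t t' < eps.

Definition omega_bounded (F : Functor) (G : SubFunctor F) : Prop :=
  forall (X : BPMet) (t : Fo F X), sf_pred G t ->
    exists (l : list X) (t' : Fo F (Sub l)),
      sf_pred G t' /\ t = Fm F (sub_incl l) t'.

Lemma abs_tri (a b c : R) : Rabs (a - c) <= Rabs (a - b) + Rabs (b - c).
Proof. split_Rabs; lra. Qed.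

Definition I01 : BPMet.
Proof.
  refine {| car := {u : R | 0 <= u <= 1};
            dist := fun a b : {u : R | 0 <= u <= 1} => Rabs (proj1_sig a - proj1_sig b) |}.
  - intros [a Ha] [b Hb]; simpl; split_Rabs; lra.
  - intros [a Ha]; simpl; split_Rabs; lra.
  - intros [a Ha] [b Hb]; simpl; split_Rabs; lra.
  - intros [a Ha] [b Hb] [c Hc]; simpl; apply abs_tri.
Defined.

Definition val01 (u : I01) : R := proj1_sig u.

Lemma le_bigmax_seq (I : Type) (s : seq I) (F : I -> R) (i : I) :
  List.In i s -> F i <= \big[Rmax/0]_(j <- s) F j.
Proof.
  elim: s => [|a s IH] //= [->|H]; rewrite big_cons.
  - apply Rmax_l.
  - eapply Rle_trans; [apply IH, H|apply Rmax_r].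
Qed.

Lemma le_bigmax (n : nat) (F : 'I_n -> R) (i : 'I_n) :
  F i <= \big[Rmax/0]_(j < n) F j.
Proof.
  apply le_bigmax_seq.
  have H : i \in index_enum 'I_n by rewrite mem_index_enum.
  move: H. elim: (index_enum 'I_n) => [|a s IH] //=.
  rewrite in_cons => /orP [/eqP ->|H]; [by left|right; exact: IH].
Qed.

Definition Cube (n : nat) : BPMet.
Proof.
  refine {| car := 'I_n -> I01;
            dist := fun v w : 'I_n -> I01 => \big[Rmax/0]_(i < n) dist (v i) (w i) |}.
  - intros v w. apply (big_ind (fun m => 0 <= m <= 1)); try lra.
    + intros a b Ha Hb. unfold Rmax; destruct Rle_dec; lra.
    + intros i _; apply dist_bnd.
  - intros v. apply (big_ind (fun m => m = 0)); auto.
    + intros a b -> ->. unfold Rmax; destruct Rle_dec; lra.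
    + intros i _; apply dist_refl.
  - intros v w. apply eq_bigr => i _. apply dist_sym.
  - intros u v w.
    apply (big_ind (fun m => m <= \big[Rmax/0]_(i < n) dist (u i) (v i)
                               + \big[Rmax/0]_(i < n) dist (v i) (w i))).
    + apply Rplus_le_le_0_compat;
        (apply (big_ind (fun m => 0 <= m));
         [lra
         | intros a b Ha Hb; cbv beta in *; unfold Rmax at 1; destruct Rle_dec; lra
         | intros i _; apply (proj1 (dist_bnd _ _))]).
    + intros a b Ha Hb; cbv beta in *; unfold Rmax at 1; destruct Rle_dec; lra.
    + intros i _. eapply Rle_trans; [apply dist_tri|].
      apply Rplus_le_compat; [apply (le_bigmax (fun j => dist (u j) (v j)))|apply (le_bigmax (fun j => dist (v j) (w j)))].
Defined.

Record PredLifting (F : Functor) (n : nat) := {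
  pl :> forall X : BPMet, NE X (Cube n) -> NE (Fo F X) I01;
  pl_nat : forall (X Y : BPMet) (f : NE Y X) (phi : NE X (Cube n)) (t : Fo F Y),
      pl (ne_comp phi f) t = pl phi (Fm F f t) }.

Definition mk01 (r : R) (H : 0 <= r <= 1) : I01 := exist _ r H.

Definition ne_const0 (X : BPMet) : NE X I01.
Proof.
  refine {| ne := fun _ => @mk01 0 ltac:(lra) |}.
  intros x y; simpl. rewrite Rminus_0_r Rabs_R0. apply dist_bnd.
Defined.

Lemma min01 (a b : I01) : 0 <= Rmin (val01 a) (val01 b) <= 1.
Proof. destruct a as [a Ha], b as [b Hb]; simpl; unfold Rmin; destruct Rle_dec; lra. Qed.
Lemma max01 (a b : I01) : 0 <= Rmax (val01 a) (val01 b) <= 1.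
Proof. destruct a as [a Ha], b as [b Hb]; simpl; unfold Rmax; destruct Rle_dec; lra. Qed.
Lemma tens01 (u a : I01) : 0 <= Rmin 1 (val01 u + val01 a) <= 1.
Proof. destruct a as [a Ha], u as [u Hu]; simpl; unfold Rmin; destruct Rle_dec; lra. Qed.
Lemma hom01 (u a : I01) : 0 <= Rabs (val01 a - val01 u) <= 1.
Proof. destruct a as [a Ha], u as [u Hu]; simpl; split_Rabs; lra. Qed.

(* pointwise min (the quantale join) *)
Definition ne_min (X : BPMet) (f g : NE X I01) : NE X I01.
Proof.
  refine {| ne := fun x => mk01 (min01 (f x) (g x)) |}.
  intros x y; simpl.
  have Hf := ne_nexp f x y; have Hg := ne_nexp g x y; simpl in Hf, Hg.
  revert Hf Hg; unfold val01, Rmin.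
  destruct (f x) as [a1 ?], (g x) as [b1 ?], (f y) as [a2 ?], (g y) as [b2 ?]; simpl;
  repeat destruct Rle_dec; split_Rabs; lra.
Defined.

(* pointwise max (the quantale meet) *)
Definition ne_max (X : BPMet) (f g : NE X I01) : NE X I01.
Proof.
  refine {| ne := fun x => mk01 (max01 (f x) (g x)) |}.
  intros x y; simpl.
  have Hf := ne_nexp f x y; have Hg := ne_nexp g x y; simpl in Hf, Hg.
  revert Hf Hg; unfold val01, Rmax.
  destruct (f x) as [a1 ?], (g x) as [b1 ?], (f y) as [a2 ?], (g y) as [b2 ?]; simpl;
  repeat destruct Rle_dec; split_Rabs; lra.
Defined.

Definition ne_tens (X : BPMet) (u : I01) (f : NE X I01) : NE X I01.
Proof.
  refine {| ne := fun x => mk01 (tens01 u (f x)) |}.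
  intros x y; simpl.
  have Hf := ne_nexp f x y; simpl in Hf.
  revert Hf; unfold val01, Rmin.
  destruct (f x) as [a1 ?], (f y) as [a2 ?], u as [u0 ?]; simpl;
  repeat destruct Rle_dec; split_Rabs; lra.
Defined.

Definition ne_hom (X : BPMet) (u : I01) (f : NE X I01) : NE X I01.
Proof.
  refine {| ne := fun x => mk01 (hom01 u (f x)) |}.
  intros x y; simpl.
  have Hf := ne_nexp f x y; simpl in Hf.
  revert Hf; unfold val01.
  destruct (f x) as [a1 ?], (f y) as [a2 ?], u as [u0 ?]; simpl;
  split_Rabs; lra.
Defined.

Definition ne_tuple (X : BPMet) (n : nat) (fs : 'I_n -> NE X I01) : NE X (Cube n).
Proof.
  refine {| ne := (fun x => fun i => fs i x) : X -> Cube n |}.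
  intros x y; simpl.
  apply (big_ind (fun m => m <= dist x y)).
  - apply dist_bnd.
  - intros a b Ha Hb; cbv beta in *; unfold Rmax at 1; destruct Rle_dec; lra.
  - intros i _; apply (ne_nexp (fs i)).
Defined.

(* Lambda is given as a family lam indexed by L, with arities ar *)
Inductive Form (L : Type) (ar : L -> nat) : Type :=
| FTop : Form ar
| FOr : Form ar -> Form ar -> Form ar
| FAnd : Form ar -> Form ar -> Form ar
| FTens : I01 -> Form ar -> Form ar
| FHom : I01 -> Form ar -> Form ar
| FLam : forall l : L, ('I_(ar l) -> Form ar) -> Form ar.

Fixpoint sem (F : Functor) (L : Type) (ar : L -> nat)
    (lam : forall l : L, PredLifting F (ar l))
    (X : BPMet) (alpha : NE X (Fo F X)) (phi : Form ar) {struct phi} : NE X I01 :=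
  match phi with
  | FTop => ne_const0 X
  | FOr a b => ne_min (sem lam alpha a) (sem lam alpha b)
  | FAnd a b => ne_max (sem lam alpha a) (sem lam alpha b)
  | FTens u a => ne_tens u (sem lam alpha a)
  | FHom u a => ne_hom u (sem lam alpha a)
  | FLam l args =>
      ne_comp (lam l X (ne_tuple (fun i => sem lam alpha (args i)))) alpha
  end.

Definition ld (F : Functor) (L : Type) (ar : L -> nat)
    (lam : forall l : L, PredLifting F (ar l))
    (X : BPMet) (alpha : NE X (Fo F X)) (x y : X) : Rbar :=
  Lub_Rbar (fun r => exists phi : Form ar,
      r = Rabs (val01 (sem lam alpha phi x) - val01 (sem lam alpha phi y))).

Definition coalg_morph (F : Functor) (X Y : BPMet)
    (alpha : NE X (Fo F X)) (beta : NE Y (Fo F Y)) (f : NE X Y) : Prop :=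
  forall x : X, beta (f x) = Fm F f (alpha x).

Definition bd (F : Functor) (X : BPMet) (alpha : NE X (Fo F X)) (x y : X) : Rbar :=
  Glb_Rbar (fun r => exists (Y : BPMet) (beta : NE Y (Fo F Y)) (f : NE X Y),
      coalg_morph alpha beta f /\ r = dist (f x) (f y)).

(* Main.v *)
Require Import Defs.
From Stdlib Require Import Reals Lra.
From Stdlib Require Import ProofIrrelevance FunctionalExtensionality ClassicalEpsilon Classical.
From Stdlib Require List.
From mathcomp Require Import ssreflect ssrfun ssrbool eqtype ssrnat seq fintype bigop.
From Coquelicot Require Import Rbar Lub.
Require Import Defs.
Set Implicit Arguments. Unset Strict Implicit.
Open Scope R_scope.

Lemma NE_ext (X Y : BPMet) (f g : NE X Y) : (forall x, f x = g x) -> f = g.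
Proof.
  destruct f as [f Hf], g as [g Hg]; simpl => H.
  have E : f = g by apply functional_extensionality.
  subst g. f_equal. apply proof_irrelevance.
Qed.

Lemma bigmax_le n (F : 'I_n -> R) c : 0 <= c -> (forall i, F i <= c) ->
  \big[Rmax/0]_(i<n) F i <= c.
Proof.
  move=> Hc H. apply (big_ind (fun m => m <= c)); first exact Hc.
  - move=> a b Ha Hb; unfold Rmax; destruct Rle_dec; lra.
  - move=> i _; exact: H.
Qed.

Lemma val01_bnd (u : I01) : 0 <= val01 u <= 1.
Proof. exact: proj2_sig u. Qed.

Section Log.
Variables (F : Functor) (L : Type) (ar : L -> nat) (lam : forall l : L, PredLifting F (ar l))
  (X : BPMet) (alpha : NE X (Fo F X)).

Definition fd (phi : Form ar) (x y : X) :=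
  Rabs (val01 (sem lam alpha phi x) - val01 (sem lam alpha phi y)).

Lemma fd_le1 phi x y : fd phi x y <= 1.
Proof. rewrite /fd. have := val01_bnd (sem lam alpha phi x). have := val01_bnd (sem lam alpha phi y). split_Rabs; lra. Qed.

Lemma fd_top x y : fd (FTop ar) x y = 0.
Proof. rewrite /fd /=. rewrite Rminus_0_r Rabs_R0 //. Qed.

Definition ldR x y := real (ld lam alpha x y).

Lemma ld_fin x y : ld lam alpha x y = Finite (ldR x y) /\
   (forall phi, fd phi x y <= ldR x y) /\
   (forall c, (forall phi, fd phi x y <= c) -> ldR x y <= c).
Proof.
  rewrite /ldR /ld.
  set E := (fun r => _).
  have [Hub Hl] := Lub_Rbar_correct E.
  have H1 : Rbar_le (Lub_Rbar E) 1.
    apply Hl => r [phi ->]. exact: fd_le1.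
  have H0 : Rbar_le 0 (Lub_Rbar E).
    apply Hub. exists (FTop ar). by rewrite -(fd_top x y).
  destruct (Lub_Rbar E) as [r| |] eqn:Heq => //=.
  split; first done. split.
  - move=> phi. exact: (Hub _ (ex_intro _ phi erefl)).
  - move=> c Hc. have : Rbar_le r c. apply Hl => z [phi ->]; exact: Hc. done.
Qed.

Lemma ldR_ge phi x y : fd phi x y <= ldR x y.
Proof. by have [_ [H _]] := ld_fin x y. Qed.
Lemma ldR_lub x y c : (forall phi, fd phi x y <= c) -> ldR x y <= c.
Proof. have [_ [_ H]] := ld_fin x y; exact: H. Qed.
Lemma ldR_approx x y eps : 0 < eps -> exists phi, ldR x y - eps < fd phi x y.
Proof.
  move=> He. apply: NNPP; intro Hn.
  have : ldR x y <= ldR x y - eps.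
    apply ldR_lub => phi. apply Rnot_lt_le => Hl. apply Hn; by exists phi.
  lra.
Qed.

Lemma ldR_bnd x y : 0 <= ldR x y <= 1.
Proof. split. rewrite -(fd_top x y); exact: ldR_ge. apply ldR_lub => phi; exact: fd_le1. Qed.
Lemma ldR_refl x : ldR x x = 0.
Proof. apply Rle_antisym; last exact (proj1 (ldR_bnd x x)). apply ldR_lub => phi.
  rewrite /fd Rminus_diag_eq // Rabs_R0; lra. Qed.
Lemma ldR_sym x y : ldR x y = ldR y x.
Proof.
  have H : forall a b, ldR a b <= ldR b a.
    move=> a b; apply ldR_lub => phi. rewrite /fd Rabs_minus_sym. exact: ldR_ge.
  apply Rle_antisym; exact: H.
Qed.
Lemma ldR_tri x y z : ldR x z <= ldR x y + ldR y z.
Proof. apply ldR_lub => phi. eapply Rle_trans; first apply abs_tri.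
  apply Rplus_le_compat; exact: ldR_ge. Qed.
Lemma ldR_le_dist x y : ldR x y <= dist x y.
Proof. apply ldR_lub => phi. exact: (ne_nexp (sem lam alpha phi) x y). Qed.

Definition Ysp : BPMet := {| car := car X; dist := ldR; dist_bnd := ldR_bnd;
  dist_refl := ldR_refl; dist_sym := ldR_sym; dist_tri := ldR_tri |}.

Definition iY : NE X Ysp := {| ne := (fun z => z) : X -> Ysp; ne_nexp := ldR_le_dist |}.

Definition semY (phi : Form ar) : NE Ysp I01 :=
  {| ne := (sem lam alpha phi : X -> I01) : Ysp -> I01; ne_nexp := ldR_ge phi |}.

Fixpoint andL (I : Type) (f : I -> Form ar) (s : seq I) : Form ar :=
  match s with nil => FTop ar | a :: r => FAnd (f a) (andL f r) end.

Lemma andL_ge (I : eqType) (f : I -> Form ar) s k z : k \in s ->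
  val01 (sem lam alpha (f k) z) <= val01 (sem lam alpha (andL f s) z).
Proof.
  elim: s => [|a s IH] //=. rewrite in_cons => /orP [/eqP ->|H].
  - apply Rmax_l.
  - eapply Rle_trans; [exact: IH|apply Rmax_r].
Qed.

Lemma andL_le (I : Type) (f : I -> Form ar) s z c : 0 <= c ->
  (forall k, val01 (sem lam alpha (f k) z) <= c) ->
  val01 (sem lam alpha (andL f s) z) <= c.
Proof.
  move=> Hc H. elim: s => [|a s IH] //=. 
  apply Rmax_lub; [exact: H|exact: IH].
Qed.
End Log.

Definition liftPL (F : Functor) n (g : NE (Fo F (Cube n)) I01) : PredLifting F n.
Proof.
  refine {| pl := fun X phi => ne_comp g (Fm F phi) |}.
  intros. simpl. by rewrite Fm_comp.
Defined.

Definition dfrom (Z : BPMet) (a : Z) : NE Z I01.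
Proof.
  refine {| ne := fun t => mk01 (dist_bnd a t) |}.
  intros t t'; simpl.
  have h1 := dist_tri a t t'; have h2 := dist_tri a t' t.
  rewrite (dist_sym t' t) in h2. split_Rabs; lra.
Defined.

Definition sub_mono (Z : BPMet) (l l' : list Z) (H : forall a, List.In a l -> List.In a l') :
  NE (Sub l) (Sub l').
Proof.
  refine {| ne := (fun a => exist _ (proj1_sig a) (H _ (proj2_sig a))) : Sub l -> Sub l' |}.
  intros; simpl; lra.
Defined.

Lemma sub_mono_incl (Z : BPMet) (l l' : list Z) (H : forall a, List.In a l -> List.In a l') :
  ne_comp (sub_incl l') (sub_mono H) = sub_incl l.
Proof. by apply NE_ext. Qed.

Definition frechet (Z : BPMet) (P : list Z) (z0 : Z) : NE Z (Cube (length P)).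
Proof.
  refine {| ne := (fun z => fun k : 'I_(length P) => mk01 (dist_bnd z (List.nth k P z0)))
                 : Z -> Cube (length P) |}.
  intros z z'; simpl. apply bigmax_le; first exact (proj1 (dist_bnd _ _)).
  move=> k /=. set p := List.nth k P z0.
  have h1 := dist_tri z z' p; have h2 := dist_tri z' z p.
  rewrite (dist_sym z' z) in h2. split_Rabs; lra.
Defined.

Lemma in_ord (Z : Type) (P : list Z) (z0 b : Z) : List.In b P ->
  exists k : 'I_(length P), List.nth k P z0 = b.
Proof.
  move=> H. have [n [Hn Hb]] := List.In_nth P b z0 H.
  have Hn' : (n < length P)%nat by apply/ltP.
  by exists (Ordinal Hn').
Qed.

Lemma frechet_iso (Z : BPMet) (P : list Z) (z0 : Z) :
  isometry (ne_comp (frechet P z0) (sub_incl P)).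
Proof.
  move=> a b. apply Rle_antisym; first exact: ne_nexp.
  have [k Hk] := in_ord z0 (proj2_sig b).
  eapply Rle_trans; last first.
    apply (le_bigmax (fun j : 'I_(length P) => dist (frechet P z0 (proj1_sig a) j) (frechet P z0 (proj1_sig b) j)) k).
  simpl. rewrite Hk dist_refl Rminus_0_r Rabs_pos_eq; last exact (proj1 (dist_bnd _ _)).
  right; reflexivity.
Qed.

Section Key.
Variables (F : Functor) (HI : preserves_isometries F) (HL : locally_nonexpansive F)
  (G : SubFunctor F) (HD : dense_sub G) (HO : omega_bounded G).
Definition LA := {n : nat & NE (Fo F (Cube n)) I01}.
Definition arA (l : LA) : nat := projT1 l.
Definition lamA (l : LA) : PredLifting F (arA l) := liftPL (projT2 l).
Variables (X : BPMet) (alpha : NE X (Fo F X)).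

Lemma key_eps x y eps : 0 < eps ->
  dist (Fm F (iY lamA alpha) (alpha x)) (Fm F (iY lamA alpha) (alpha y))
   <= ldR lamA alpha x y + 6 * eps.
Proof.
  move=> He.
  set Y := Ysp lamA alpha.
  set s := Fm F (iY lamA alpha) (alpha x). set t := Fm F (iY lamA alpha) (alpha y).
  have [s1 [Gs1 Hs1]] := HD s He.
  have [t1 [Gt1 Ht1]] := HD t He.
  have [l [u [_ Hu]]] := HO Gs1.
  have [l' [v [_ Hv]]] := HO Gt1.
  pose P := (l ++ l')%list.
  have H1 : forall a, List.In a l -> List.In a P by move=> a Ha; apply List.in_or_app; left.
  have H2 : forall a, List.In a l' -> List.In a P by move=> a Ha; apply List.in_or_app; right.
  pose u' := Fm F (sub_mono H1) u. pose v' := Fm F (sub_mono H2) v.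
  have Es1 : s1 = Fm F (sub_incl P) u' by rewrite Hu /u' -Fm_comp sub_mono_incl.
  have Et1 : t1 = Fm F (sub_incl P) v' by rewrite Hv /v' -Fm_comp sub_mono_incl.
  pose m := length P.
  pose p := fun k : 'I_m => List.nth k P x.
  have Hch : forall k k' : 'I_m, exists phi : Form arA,
      ldR lamA alpha (p k') (p k) - eps < fd lamA alpha phi (p k') (p k).
    move=> k k'; exact: ldR_approx.
  pose phis := fun k k' => proj1_sig (constructive_indefinite_description _ (Hch k k')).
  have Hphis : forall k k', ldR lamA alpha (p k') (p k) - eps < fd lamA alpha (phis k k') (p k') (p k).
    move=> k k'; exact: (proj2_sig (constructive_indefinite_description _ (Hch k k'))).
  pose psi := fun k : 'I_m =>
    andL (fun k' => FHom (sem lamA alpha (phis k k') (p k)) (phis k k')) (enum 'I_m).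
  have psi_le : forall k z, val01 (sem lamA alpha (psi k) z) <= ldR lamA alpha z (p k).
    move=> k z. apply andL_le; first exact (proj1 (ldR_bnd _ _ _ _)).
    move=> k' /=. exact: (ldR_ge lamA alpha (phis k k') z (p k)).
  have psi_ge : forall k k', ldR lamA alpha (p k') (p k) - eps < val01 (sem lamA alpha (psi k) (p k')).
    move=> k k'. eapply Rlt_le_trans; first exact: Hphis.
    apply: (@andL_ge _ _ _ lamA _ alpha _ (fun k' => FHom (sem lamA alpha (phis k k') (p k)) (phis k k')) (enum 'I_m) k' (p k')).
    by rewrite mem_enum.
  pose PsiY := ne_tuple (fun k => semY lamA alpha (psi k)) : NE Y (Cube m).
  pose PsiX := ne_tuple (fun k => sem lamA alpha (psi k)) : NE X (Cube m).
  pose E := frechet P x : NE Y (Cube m).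
  have Hclose : forall a : Sub P, dist (ne_comp E (sub_incl P) a) (ne_comp PsiY (sub_incl P) a) <= eps.
    move=> a. apply bigmax_le; first lra. move=> k /=.
    have [k' Hk'] := in_ord x (proj2_sig a).
    have A1 := psi_le k (proj1_sig a). have A2 := psi_ge k k'.
    rewrite /p in A2. rewrite Hk' in A2. rewrite /p in A1.
    have Hab : forall a b, a <= b -> b - eps < a -> Rabs (b - a) <= eps by move=> ? ? ? ?; split_Rabs; lra.
    exact: Hab A1 A2.
  have HLu := HL (Rlt_le _ _ He) Hclose u'.
  have HLv := HL (Rlt_le _ _ He) Hclose v'.
  have Iso := HI (@frechet_iso Y P x) u' v'.
  have EA : Fm F (ne_comp PsiY (sub_incl P)) u' = Fm F PsiY s1 by rewrite Fm_comp Es1.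
  have EB : Fm F (ne_comp PsiY (sub_incl P)) v' = Fm F PsiY t1 by rewrite Fm_comp Et1.
  have EX : forall z, Fm F PsiY (Fm F (iY lamA alpha) (alpha z)) = Fm F PsiX (alpha z).
    move=> z; rewrite -Fm_comp. have -> : ne_comp PsiY (iY lamA alpha) = PsiX by apply NE_ext => w; reflexivity. reflexivity.
  have N1 := ne_nexp (Fm F PsiY) s1 s.
  have N2 := ne_nexp (Fm F PsiY) t1 t.
  have N3 := ne_nexp (Fm F (sub_incl P)) u' v'.
  rewrite -Es1 -Et1 in N3.
  rewrite EA in HLu. rewrite EB in HLv.
  rewrite /s /t !EX in N1 N2.
  have Hf := ldR_ge lamA alpha (@FLam LA arA (existT _ m (dfrom (Fm F PsiX (alpha x)))) psi) x y.
  rewrite /fd /= in Hf.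
  rewrite -/PsiX dist_refl Rminus_0_l Rabs_Ropp Rabs_pos_eq in Hf; last exact (proj1 (dist_bnd _ _)).
  rewrite -/s -/t in N1 N2.
  rewrite (dist_sym s1 s) in N1. rewrite (dist_sym t1 t) in N2.
  have T1 := dist_tri s s1 t. have T2 := dist_tri s1 t1 t.
  rewrite (dist_sym t1 t) in T2.
  set a := Fm F (ne_comp E (sub_incl P)) u'.
  set b := Fm F (ne_comp E (sub_incl P)) v'.
  have Iso' : dist a b = dist u' v' by exact: Iso.
  have T3 := dist_tri a (Fm F PsiY s1) b.
  have T4 := dist_tri (Fm F PsiY s1) (Fm F PsiY t1) b.
  rewrite (dist_sym (Fm F PsiY t1) b) in T4.
  have T5 := dist_tri (Fm F PsiY s1) (Fm F PsiX (alpha x)) (Fm F PsiY t1).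
  have T6 := dist_tri (Fm F PsiX (alpha x)) (Fm F PsiX (alpha y)) (Fm F PsiY t1).
  rewrite (dist_sym (Fm F PsiX (alpha y)) (Fm F PsiY t1)) in T6.
  have HLu' : dist a (Fm F PsiY s1) <= eps by exact: HLu.
  have HLv' : dist b (Fm F PsiY t1) <= eps by exact: HLv.
  have S1 : dist s t <= dist s s1 + dist s1 t1 + dist t t1 by lra.
  have S2 : dist s1 t1 <= dist a b by lra.
  have S3 : dist a b <= 2*eps + dist (Fm F PsiY s1) (Fm F PsiY t1) by lra.
  have S4 : dist (Fm F PsiY s1) (Fm F PsiY t1) <= 2*eps + ldR lamA alpha x y by lra.
  have Hs1' : dist s s1 < eps by exact: Hs1.
  have Ht1' : dist t t1 < eps by exact: Ht1.
  have Fin : dist s t <= ldR lamA alpha x y + 6*eps by lra.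
  exact: Fin.
Qed.

Lemma key x y : dist (Fm F (iY lamA alpha) (alpha x)) (Fm F (iY lamA alpha) (alpha y))
   <= ldR lamA alpha x y.
Proof.
  apply Rnot_lt_le => Hlt.
  have He : 0 < (dist (Fm F (iY lamA alpha) (alpha x)) (Fm F (iY lamA alpha) (alpha y)) - ldR lamA alpha x y)/12 by lra.
  have := key_eps x y He. lra.
Qed.

Definition betaY : NE (Ysp lamA alpha) (Fo F (Ysp lamA alpha)) :=
  {| ne := (fun z => Fm F (iY lamA alpha) (alpha z)) : Ysp lamA alpha -> Fo F (Ysp lamA alpha);
     ne_nexp := key |}.

Lemma bd_le x y : Rbar_le (bd alpha x y) (ld lamA alpha x y).
Proof.
  have [-> _] := ld_fin lamA alpha x y.
  have [Hlb _] := Glb_Rbar_correct (fun r => exists (Y : BPMet) (beta : NE Y (Fo F Y)) (f : NE X Y),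
      coalg_morph alpha beta f /\ r = dist (f x) (f y)).
  apply Hlb. exists (Ysp lamA alpha), betaY, (iY lamA alpha). split; [by move=> z|reflexivity].
Qed.
End Key.

Theorem corollary5 (F : Functor) :
  preserves_isometries F ->
  locally_nonexpansive F ->
  (exists G : SubFunctor F, dense_sub G /\ omega_bounded G) ->
  exists (L : Type) (ar : L -> nat) (lam : forall l : L, PredLifting F (ar l)),
    forall (X : BPMet) (alpha : NE X (Fo F X)) (x y : X),
      Rbar_le (bd alpha x y) (ld lam alpha x y).
Proof.
  move=> HI HL [G [HD HO]].
  exists (LA F), (@arA F), (@lamA F).
  move=> X alpha x y. exact: (bd_le HI HL HD HO alpha x y).
Qed.
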